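(* Suppose that every first countable, hereditarily Lindel\''of, regular space is hereditarily separable. Then every locally compact, perfectly normal space is locally separable (every point has a separable neighbourhood).
   Context: A space is perfectly normal if it is normal and every closed set is a $G_\delta$. Hereditarily Lindel\''of (resp. hereditarily separable) means every subspace is Lindel\''of (resp. separable). *)

(* Defs.v *)
From HB Require Import structures.
From mathcomp Require Import all_boot all_order all_algebra.
From mathcomp Require Import all_classical all_reals all_analysis.
From mathcomp Require Import borel_hierarchy.
Set Implicit Arguments. Unset Strict Implicit. Unset Printing Implicit Defensive.
Local Open Scope classical_set_scope.

Section Defs.
Context {T : topologicalType}.

Definition first_countable_space : Prop :=
  forall x : T, exists B : nat -> set T,
    (forall n, nbhs x (B n)) /\ (forall U, nbhs x U -> exists n, B n `<=` U).

(* A (with the subspace topology) is Lindelof: every cover of A by open sets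
   of T has a countable subcover *)
Definition lindelof_set (A : set T) : Prop :=
  forall C : set (set T), (forall U, C U -> open U) ->
    A `<=` \bigcup_(U in C) U ->
    exists D : set (set T), [/\ D `<=` C, countable D & A `<=` \bigcup_(U in D) U].

Definition hereditarily_lindelof : Prop := forall A : set T, lindelof_set A.

(* A (with the subspace topology) is separable: A has a countable subset
   dense in A *)
Definition separable_set (A : set T) : Prop :=
  exists D : set T, [/\ D `<=` A, countable D & A `<=` closure D].

Definition hereditarily_separable : Prop := forall A : set T, separable_set A.

Definition perfectly_normal : Prop :=
  normal_space T /\ (forall F : set T, closed F -> Gdelta F).

Definition locally_compact_space : Prop :=
  forall x : T, exists K : set T, nbhs x K /\ compact K.

Definition locally_separable : Prop :=
  forall x : T, exists N : set T, nbhs x N /\ separable_set N.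

End Defs.

(* Main.v *)
From HB Require Import structures.
Require Import Defs.
From mathcomp Require Import all_boot finmap all_classical all_analysis borel_hierarchy.
Local Open Scope classical_set_scope.

Definition pt {T : Type} (t : T) : Type := T.
HB.instance Definition _ (T : topologicalType) (t : T) := Topological.on (pt t).
HB.instance Definition _ (T : topologicalType) (t : T) := isPointed.Build (pt t) t.

Lemma compact_cover' (T : topologicalType) (A : set T) : compact A -> cover_compact A.
Proof.
move=> cA I D f fo fc.
case: (pselect (exists t, A t)) => [[t At]|nA]; last first.
  by exists fset0 => // z Az; exfalso; apply: nA; exists z.
have := @compact_cover (pt t).
move=> e. have : @compact (pt t) A by exact: cA.
rewrite e; move=> /(_ I D f fo fc). exact.
Qed.

Lemma gdelta_sat (T : topologicalType) (hG : forall F : set T, closed F -> Gdelta F)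
  (U : set T) y : open U -> U y -> closure [set y] `<=` U.
Proof.
move=> oU Uy z clz; apply: contrapT => nUz.
have [G oG eG] := hG (~` U) (open_closedC oU).
have : (~` U) y; last by apply.
rewrite eG => i _.
have : (~` U) z by [].
rewrite eG => /(_ i I) Gz.
have [w [-> _]] := clz (G i) (open_nbhs_nbhs (conj (oG i) Gz)).
have [w' [/= -> //]] := clz (G i) (open_nbhs_nbhs (conj (oG i) Gz)).
Qed.

Lemma norm_cl (T : topologicalType) (hN : normal_space T) (y : T) (G : set T) :
  open G -> closure [set y] `<=` G -> exists2 C, nbhs y C & closure C `<=` G.
Proof.
move=> oG sG.
have hW : set_nbhs (closure [set y]) G.
  move=> z /sG Gz. exact: open_nbhs_nbhs.
have [C hC sC] := hN _ (@closed_closure _ [set y]) G hW.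
exists C => //; apply: hC; exact: subset_closure.
Qed.

Fixpoint nestI {T} (C : nat -> set T) n : set T :=
  if n is m.+1 then nestI C m `&` C m.+1 else C 0.

Lemma nestI_sub T (C : nat -> set T) n : nestI C n `<=` C n.
Proof. by case: n => [|n] //= z []. Qed.

Lemma nestI_mono T (C : nat -> set T) m n : (m <= n)%N -> nestI C n `<=` nestI C m.
Proof.
elim: n => [|n IH]; first by rewrite leqn0 => /eqP ->.
rewrite leq_eqVlt => /orP [/eqP -> //|]; rewrite ltnS => /IH h z [] /h //.
Qed.

Lemma nestI_filter T (F : set_system T) (FF : Filter F) (C : nat -> set T) :
  (forall n, F (C n)) -> forall n, F (nestI C n).
Proof. by move=> h; elim => [|n IH] //=; exact: filterI. Qed.
Section Sub.
Context (Y : topologicalType) (hN : normal_space Y)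
  (hG : forall F : set Y, closed F -> Gdelta F) (K : set Y) (cK : compact K).

Local Notation X := (set_type K).
Local Notation v := (@set_val Y K : X -> Y).

Lemma v_cont : continuous v.
Proof. exact: (@initial_continuous _ _ (@set_val Y K)). Qed.

Lemma v_nbhs (p : X) (S : set Y) : nbhs (v p) S -> nbhs p (v @^-1` S).
Proof. by move=> h; apply: v_cont. Qed.

Lemma nbhs_v (p : X) (U : set X) : nbhs p U ->
  exists V : set Y, [/\ open V, V (v p) & v @^-1` V `<=` U].
Proof.
rewrite nbhsE => -[B [[V oV eV] Bp] BU].
by exists V; split => //; [rewrite -eV in Bp|rewrite eV].
Qed.

Lemma clv (E : set X) (q : X) : closure E q -> closure (v @` E) (v q).
Proof.
move=> h S /v_nbhs /h [r [Er Sr]]; exists (v r); split => //; by exists r.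
Qed.

Lemma X_regular : regular_space X.
Proof.
move=> a U /nbhs_v [W [oW Wa sWU]].
have [C nC sC] := @norm_cl _ hN _ _ oW (@gdelta_sat _ hG _ _ oW Wa).
exists (v @^-1` C); first exact: v_nbhs.
move=> q /clv h; apply: sWU; apply: sC; apply: closureS h.
by move=> _ [r Cr <-].
Qed.


Lemma X_fc : @first_countable_space X.
Proof.
move=> p.
have [G oG eG] := hG (closure [set v p]) (@closed_closure _ _).
have hC : forall n, exists C, nbhs (v p) C /\ closure C `<=` G n.
  move=> n; have sG : closure [set v p] `<=` G n by rewrite eG => z hz; exact: hz.
  by have [C ? ?] := @norm_cl _ hN (v p) (G n) (oG n) sG; exists C.
have [C hCn] := choice hC.
exists (fun n => v @^-1` nestI C n); split.
  move=> n; apply: v_nbhs; apply: nestI_filter => m; exact: (hCn m).1.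
move=> U /nbhs_v [V [oV Vy sVU]].
pose f := fun n : nat => if n is m.+1 then ~` closure (nestI C m) else V.
have fo : forall i, [set: nat] i -> open (f i).
  by case => [|m] _ /=; [exact: oV|apply: closed_openC; exact: closed_closure].
have fc : K `<=` cover [set: nat] f.
  move=> z Kz; case: (pselect (V z)) => [Vz|nVz]; first by exists 0%N.
  case: (pselect (exists m, ~ closure (nestI C m) z)) => [[m hm]|nm].
    by exists m.+1.
  exfalso; apply: nVz; apply: (@gdelta_sat _ hG _ _ oV Vy).
  rewrite eG => n _; have : closure (nestI C n) z.
    by apply: contrapT => h; apply: nm; exists n.
  move=> h; apply: (hCn n).2; apply: closureS h; exact: nestI_sub.
have [D' _ hD'] := @compact_cover' _ _ cK _ _ _ fo fc.
exists (\max_(i <- D') i)%N => q hq; apply: sVU.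
have [i Di fi] := hD' (v q) (set_valP q).
move: Di fi; case: i => [//|m] Di /= hm; exfalso; apply: hm.
apply: subset_closure.
have hle : (m <= \max_(i <- D') i)%N.
  have := @leq_bigmax_seq _ _ xpredT (fun i => i) m.+1 Di isT.
  by move=> h; apply: leq_trans h.
exact: (@nestI_mono _ C m _ hle _ hq).
Qed.

Lemma X_hl : @hereditarily_lindelof X.
Proof.
move=> A C oC AC.
pose g := fun U : set X => \bigcup_(V in [set V : set Y | open V /\ v @^-1` V = U]) V.
have go : forall U, open (g U) by move=> U; apply: bigcup_open => V [].
have gin : forall U q, C U -> U q -> g U (v q).
  by move=> U q /oC [V oV eV] Uq; exists V => //; rewrite -eV in Uq.
have gout : forall U q, g U (v q) -> U q.
  by move=> U q [V [_ <-] Vq].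
pose V0 := \bigcup_(U in C) g U.
have [G oG eG] := hG (~` V0) (open_closedC (bigcup_open (fun U _ => go U))).
have hD : forall n, exists D' : {fset set X},
    {subset D' <= C} /\ (K `&` ~` G n) `<=` cover [set` D'] g.
  move=> n.
  have cKn : compact (K `&` ~` G n) := compact_closedI cK (open_closedC (oG n)).
  have gc : (K `&` ~` G n) `<=` cover C g.
    move=> z [Kz nGz]; have : ~ (~` V0) z.
      by rewrite eG => h; apply: nGz; exact: h n I.
    by move=> /contrapT [U CU gU]; exists U.
  by have [D' sD hD'] := @compact_cover' _ _ cKn _ _ _ (fun U _ => go U) gc; exists D'.
have [Dn hDn] := choice hD.
exists (\bigcup_n [set` Dn n]); split.
- move=> U [n _ hU]; have := (hDn n).1 U hU; by rewrite inE.
- apply: bigcup_countable; first exact: card_lexx.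
  move=> n _; exact: countable_fset.
- move=> a Aa; have [U0 CU0 U0a] := AC a Aa.
  have V0a : V0 (v a) by exists U0 => //; exact: gin.
  have [n nGn] : exists n, ~ G n (v a).
    apply: contrapT => h; have : (~` V0) (v a); last by apply.
    rewrite eG => n _; apply: contrapT => hn; apply: h; by exists n.
  have [U hU gU] := (hDn n).2 (v a) (conj (set_valP a) nGn).
  by exists U; [exists n|exact: gout].
Qed.

End Sub.


Theorem lemma10 :
  (forall X : topologicalType,
      @first_countable_space X -> @hereditarily_lindelof X -> regular_space X ->
      @hereditarily_separable X) ->
  forall Y : topologicalType,
    @locally_compact_space Y -> @perfectly_normal Y -> @locally_separable Y.
Proof.
move=> H Y lc [hN hG] x.
have [K [nK cK]] := lc x.
exists K; split => //.
have hs := H (set_type K) (@X_fc _ hN hG _ cK) (@X_hl _ hG _ cK) (@X_regular _ hN hG K).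
have [D [_ cD sD]] := hs setT.
exists (@set_val Y K @` D); split.
- by move=> _ [q _ <-]; exact: set_valP.
- exact: (card_le_trans (card_image_le _ D) cD).
- move=> z Kz.
  have := @clv _ K D _ (sD (exist _ z (mem_set Kz)) I).
  by [].
Qed.
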